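(* Let $p$ be a prime and let $f(x,y)=\lambda xy+g(x)+h(y)$ with $\lambda\in\mathbb{Z}_p\setminus\{0\}$ and $g,h:\mathbb{Z}_p\to\mathbb{Z}_p$. Let $P$ be any box with inputs and outputs in $\mathbb{Z}_p$, and for $j\in\mathbb{Z}_p$ define $$\nu_j=\frac1{p^2}\sum_{x,y=0}^{p-1}\sum_{k=0}^{p-1}P(a=k,\,b=k-f(x,y)+j\mid x,y).$$ Then $$P\to\sum_{j=0}^{p-1}\nu_jP^f_j\quad\text{and}\quad P\to\sum_{j=0}^{p-1}\nu_j\,PR_{p,\lambda^{-1}j}.$$
   Context: Let $p$ be a prime. All arithmetic on elements of $\mathbb{Z}_p$ is modulo $p$, and $\lambda^{-1}$ is the inverse of $\lambda$ in $\mathbb{Z}_p$. A box is a conditional probability distribution $P(a,b\mid x,y)$ with $a,b,x,y\in\mathbb{Z}_p$. It is shared by Alice, who supplies $x$ and receives $a$, and Bob, who supplies $y$ and receives $b$. Different copies act independently. A convex combination of boxes is the corresponding convex combination of conditional distributions. For $j\in\mathbb{Z}_p$: - $PR_{p,j}(a,b\mid x,y)=1/p$ if $a-b=xy-j$, and $0$ otherwise. - $P^f_j(a,b\mid x,y)=1/p$ if $a-b=f(x,y)-j$, and $0$ otherwise. $P_1\to P_2$ means the following. For some $N\ge1$, Alice and Bob, using shared randomness, $N$ copies of $P_1$, and local processing but no communication, can exactly produce outputs distributed as $P_2(a,b\mid x,y)$ for every input pair $(x,y)$. *)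

(* Defs.v *)
From HB Require Import structures.
From mathcomp Require Import all_boot all_order all_algebra.
Set Implicit Arguments. Unset Strict Implicit. Unset Printing Implicit Defensive.
Import Order.TTheory GRing.Theory Num.Theory.
Local Open Scope ring_scope.

(* A box P(a,b|x,y) with a,b,x,y in Z_p (= 'F_p, p prime), valued in an
   ordered field R; argument order: P a b x y. *)
Definition box (R : realFieldType) (p : nat) := 'F_p -> 'F_p -> 'F_p -> 'F_p -> R.

Definition is_box (R : realFieldType) (p : nat) (P : box R p) : Prop :=
  forall x y : 'F_p,
    (forall a b : 'F_p, 0 <= P a b x y) /\
    \sum_(a : 'F_p) \sum_(b : 'F_p) P a b x y = 1.

Definition PR (R : realFieldType) (p : nat) (j : 'F_p) : box R p :=
  fun a b x y => if a - b == x * y - j then (p%:R)^-1 else 0.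

Definition Pf (R : realFieldType) (p : nat) (f : 'F_p -> 'F_p -> 'F_p) (j : 'F_p)
  : box R p :=
  fun a b x y => if a - b == f x y - j then (p%:R)^-1 else 0.

Definition mix (R : realFieldType) (p : nat) (w : 'F_p -> R) (B : 'F_p -> box R p)
  : box R p :=
  fun a b x y => \sum_(j : 'F_p) w j * B j a b x y.

Definition copies (R : realFieldType) (p N : nat) (P : box R p)
  (as_ bs xs ys : {ffun 'I_N -> 'F_p}) : R :=
  \prod_(i < N) P (as_ i) (bs i) (xs i) (ys i).

(* Box produced by a local protocol: shared randomness l : 'I_n with
   weights mu; Alice feeds inputs ina l x into the N copies and outputs
   outa l x (outputs of her N copies); similarly for Bob.  Local randomness
   is absorbed into the (finite) shared randomness. *)
Definition protocol_box (R : realFieldType) (p N n : nat) (P : box R p)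
  (mu : 'I_n -> R)
  (ina : 'I_n -> 'F_p -> {ffun 'I_N -> 'F_p})
  (inb : 'I_n -> 'F_p -> {ffun 'I_N -> 'F_p})
  (outa : 'I_n -> 'F_p -> {ffun 'I_N -> 'F_p} -> 'F_p)
  (outb : 'I_n -> 'F_p -> {ffun 'I_N -> 'F_p} -> 'F_p) : box R p :=
  fun a b x y =>
    \sum_(l < n) mu l *
      \sum_(as_ : {ffun 'I_N -> 'F_p}) \sum_(bs : {ffun 'I_N -> 'F_p})
        (if (outa l x as_ == a) && (outb l y bs == b)
         then copies P as_ bs (ina l x) (inb l y) else 0).

Definition converts (R : realFieldType) (p : nat) (P1 P2 : box R p) : Prop :=
  exists (N n : nat) (mu : 'I_n -> R)
    (ina inb : 'I_n -> 'F_p -> {ffun 'I_N -> 'F_p})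
    (outa outb : 'I_n -> 'F_p -> {ffun 'I_N -> 'F_p} -> 'F_p),
    [/\ (0 < N)%N,
        (forall l, 0 <= mu l),
        \sum_(l < n) mu l = 1 &
        forall a b x y : 'F_p,
          protocol_box P1 mu ina inb outa outb a b x y = P2 a b x y].

Notation "P1 '-->' P2" := (converts P1 P2) (at level 70).

(* Main.v *)
Require Import Defs.
From HB Require Import structures.
From mathcomp Require Import all_boot all_order all_algebra.
From mathcomp Require Import ring.
Import Order.TTheory GRing.Theory Num.Theory.
Local Open Scope ring_scope.

Lemma sum_ifeq (R : nmodType) (T : finType) (e : T) (F : T -> R) :
  \sum_(i : T) (if i == e then F i else 0) = F e.
Proof. by rewrite -big_mkcond big_pred1_eq. Qed.

Lemma sum2_if (R : nmodType) (T : finType) (A0 B0 : T) (F : T -> T -> R) :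
  \sum_(a : T) \sum_(b : T) (if (a == A0) && (b == B0) then F a b else 0)
  = F A0 B0.
Proof.
rewrite (bigD1 A0) //= [X in _ + X]big1 ?addr0.
  by under eq_bigr do rewrite eqxx andTb; rewrite sum_ifeq.
by move=> a /negbTE ->; rewrite big1.
Qed.

Lemma sum_ffun1 (R : nmodType) (T : finType) (F : {ffun 'I_1 -> T} -> R) :
  \sum_(f : {ffun 'I_1 -> T}) F f = \sum_(t : T) F [ffun=> t].
Proof.
rewrite (reindex (fun t : T => [ffun=> t])) //.
exists (fun f : {ffun 'I_1 -> T} => f ord0) => [t _|f _]; first by rewrite ffunE.
by apply/ffunP => i; rewrite ffunE (ord1 i).
Qed.

Lemma eq_mulc (p : nat) (c a' K a : 'F_p) : c != 0 ->
  (c * (a' + K) == a) = (a' == c^-1 * a - K).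
Proof.
move=> hc; apply/eqP/eqP => E.
  by rewrite -E mulrA mulVf // mul1r addrK.
by rewrite E subrK mulrA divff // mul1r.
Qed.

Section Gen.
Variables (R : realFieldType) (p : nat) (hp : prime p) (lam : 'F_p)
  (g h : 'F_p -> 'F_p) (P : box R p) (c : 'F_p) (hc : c != 0)
  (G H : 'F_p -> 'F_p).

Let f := fun x y : 'F_p => lam * x * y + g x + h y.
Let T := ('F_p * 'F_p * 'F_p)%type.
Let n := #|{: T}|.
Let ev (l : 'I_n) : T := enum_val l.
Let alpha (x u v : 'F_p) := - (lam * x * v) - lam * u * v - g (x + u) + G x.
Let beta (y u v : 'F_p) := lam * u * y + h (y + v) - H y.

Definition ina0 (l : 'I_n) (x : 'F_p) : {ffun 'I_1 -> 'F_p} := [ffun=> x + (ev l).1.1].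
Definition inb0 (l : 'I_n) (y : 'F_p) : {ffun 'I_1 -> 'F_p} := [ffun=> y + (ev l).1.2].
Definition outa0 (l : 'I_n) (x : 'F_p) (as_ : {ffun 'I_1 -> 'F_p}) : 'F_p :=
  c * (as_ ord0 + (alpha x (ev l).1.1 (ev l).1.2 + (ev l).2)).
Definition outb0 (l : 'I_n) (y : 'F_p) (bs : {ffun 'I_1 -> 'F_p}) : 'F_p :=
  c * (bs ord0 + (beta y (ev l).1.1 (ev l).1.2 + (ev l).2)).
Definition mu0 (l : 'I_n) : R := (n%:R)^-1.

Lemma n_eq : n = (p ^ 3)%N.
Proof. by rewrite /n !card_prod card_Fp // expnS expnS expn1 mulnA. Qed.

Lemma n_neq0 : (n%:R : R) != 0.
Proof. by rewrite pnatr_eq0 n_eq expn_eq0 andbT -lt0n prime_gt0. Qed.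

Lemma gen_box a b x y :
  protocol_box P mu0 ina0 inb0 outa0 outb0 a b x y =
  (n%:R)^-1 * \sum_(x' : 'F_p) \sum_(y' : 'F_p) \sum_(k : 'F_p)
     P k (k - c^-1 * (a - b) + (lam * x * y + G x + H y) - f x' y') x' y'.
Proof.
rewrite /protocol_box /mu0 -mulr_sumr; congr (_ * _).
under eq_bigr => l _.
  rewrite sum_ffun1; under eq_bigr => t _ do rewrite sum_ffun1.
  under eq_bigr => t _.
    under eq_bigr => s _.
      rewrite /outa0 /outb0 /copies big_ord1 !ffunE !eq_mulc //.
    over.
    over.
  rewrite sum2_if.
  over.
rewrite /= -(big_enum_val (fun t : T =>
   P (c^-1 * a - (alpha x t.1.1 t.1.2 + t.2)) (c^-1 * b - (beta y t.1.1 t.1.2 + t.2))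
     (x + t.1.1) (y + t.1.2))).
set Q := fun (u v s : 'F_p) => P (c^-1 * a - (alpha x u v + s))
       (c^-1 * b - (beta y u v + s)) (x + u) (y + v).
transitivity (\sum_(u : 'F_p) \sum_(v : 'F_p) \sum_(s : 'F_p) Q u v s).
  rewrite (eq_bigl (fun _ => true)) //.
  rewrite -(pair_bigA _ (fun uv s => Q uv.1 uv.2 s)) /=.
  by rewrite -(pair_bigA _ (fun u v => \sum_s Q u v s)).
rewrite [RHS](reindex_inj (addrI x)); apply: eq_bigr => u _.
rewrite [RHS](reindex_inj (addrI y)); apply: eq_bigr => v _.
rewrite (reindex_inj (inv_inj (subKr (c^-1 * a - alpha x u v)))).
apply: eq_bigr => k _; rewrite /Q; congr P.
  ring.
rewrite /f /alpha /beta; ring.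
Qed.

Lemma gen_conv (Q : box R p) :
  (forall a b x y, Q a b x y = (n%:R)^-1 * \sum_(x' : 'F_p) \sum_(y' : 'F_p)
     \sum_(k : 'F_p)
     P k (k - c^-1 * (a - b) + (lam * x * y + G x + H y) - f x' y') x' y') ->
  P --> Q.
Proof.
move=> hQ; exists 1%N, n, mu0, ina0, inb0, outa0, outb0; split => //.
- by move=> l; rewrite /mu0 invr_ge0 ler0n.
- by rewrite sumr_const card_ord /mu0 -(mulr_natr (n%:R)^-1) mulVf // n_neq0.
- by move=> a b x y; rewrite gen_box hQ.
Qed.

Lemma inv_p (hpR : True) : ((p ^ 2)%N%:R)^-1 * (p%:R)^-1 = (n%:R)^-1 :> R.
Proof. by rewrite n_eq -invfM -natrM -expnSr. Qed.
End Gen.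

Theorem mainTheorem9 (R : realFieldType) (p : nat) (hp : prime p)
  (lam : 'F_p) (hlam : lam != 0) (g h : 'F_p -> 'F_p) (P : box R p)
  (hP : is_box P) :
  let f := fun x y : 'F_p => lam * x * y + g x + h y in
  let nu := fun j : 'F_p =>
    ((p ^ 2)%N%:R)^-1 *
      \sum_(x : 'F_p) \sum_(y : 'F_p) \sum_(k : 'F_p) P k (k - f x y + j) x y in
  (P --> mix nu (fun j => Pf R f j)) /\
  (P --> mix nu (fun j => PR R (lam^-1 * j))).
Proof.
move=> f nu; split.
- apply: (@gen_conv R p hp lam g h P 1 (oner_neq0 _) g h) => a b x y.
  rewrite /mix /Pf (bigD1 (f x y - (a - b))) //= [X in _ + X]big1 ?addr0.
    rewrite subKr eqxx /nu mulrAC inv_p //; congr (_ * _).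
    apply: eq_bigr => x' _; apply: eq_bigr => y' _; apply: eq_bigr => k _.
    by congr P; rewrite invr1 /f; ring.
  move=> j hj; case: eqP => [E|]; last by rewrite mulr0.
  by move: hj; rewrite E subKr eqxx.
- have hc : lam^-1 != 0 by rewrite invr_eq0.
  apply: (@gen_conv R p hp lam g h P _ hc (fun _ => 0) (fun _ => 0)) => a b x y.
  rewrite /mix /PR (bigD1 (lam * (x * y - (a - b)))) //= [X in _ + X]big1 ?addr0.
    rewrite mulrA mulVf // mul1r subKr eqxx /nu mulrAC inv_p //.
    congr (_ * _).
    apply: eq_bigr => x' _; apply: eq_bigr => y' _; apply: eq_bigr => k _.
    by congr P; rewrite invrK /f; ring.
  move=> j hj; case: eqP => [E|]; last by rewrite mulr0.
  move: hj; have -> : j = lam * (x * y - (a - b)).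
    by rewrite E subKr mulrA divff // mul1r.
  by rewrite eqxx.
Qed.
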